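(* Let $d\ge2$ be even, let $\bar K^\infty(t)=\frac{1}{4\pi}(t+1)(\pi-\arccos t)$, and for integers $k\ge0$ define $$c_k^d=V_d\int_{-1}^1\bar K^\infty(t)\,P_{k,d}(t)\,(1-t^2)^{\frac{d-2}{2}}\,dt,\qquad V_d=\frac{\pi^{d/2}}{\Gamma(\frac d2+1)}.$$ With $p=k+\frac{d-2}{2}$, $C_1(d,k)=\frac{\pi^{d/2}}{d/2}\frac{(-1)^k}{2^k}\frac{1}{\Gamma(k+\frac d2)}$ and $C_2(q,d,k)=(-1)^q\binom{p}{q}\frac{(2q)!}{(2q-k)!}$, one has $$c_0^d=\tfrac12C_1(d,0)\Big(\frac{1}{d\,2^{d+1}}\binom{d}{d/2}+\frac{2^{d-1}}{d\binom{d-1}{d/2}}-\frac12\sum_{q=0}^{\frac{d-2}{2}}(-1)^q\binom{\frac{d-2}{2}}{q}\frac{1}{2q+1}\Big),$$ $$c_1^d=\tfrac12C_1(d,1)\sum_{q=1}^{p}C_2(q,d,1)\Big(\frac{1}{2(2q+1)}+\frac{1}{4q}\Big(1-\frac{1}{2^{2q}}\binom{2q}{q}\Big)\Big),$$ for even $k\ge2$: $$c_k^d=\tfrac12C_1(d,k)\sum_{q=\lceil k/2\rceil}^{p}C_2(q,d,k)\Big(\frac{-1}{2(2q-k+1)}+\frac{1}{2(2q-k+2)}\Big(1-\frac{1}{2^{2q-k+2}}\binom{2q-k+2}{\frac{2q-k+2}{2}}\Big)\Big),$$ and for odd $k\ge3$: $$c_k^d=\tfrac12C_1(d,k)\sum_{q=\lceil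 k/2\rceil}^{p}C_2(q,d,k)\,\frac{1}{2(2q-k+1)}\Big(1-\frac{1}{2^{2q-k+1}}\binom{2q-k+1}{\frac{2q-k+1}{2}}\Big).$$
   Context: $P_{k,d}$ is the Gegenbauer polynomial (zonal harmonic of degree $k$ on $\mathbb{S}^d\subset\mathbb{R}^{d+1}$): $P_{k,d}(t)=\frac{(-1)^k}{2^k}\frac{\Gamma(\frac d2)}{\Gamma(k+\frac d2)}\frac{1}{(1-t^2)^{\frac{d-2}{2}}}\frac{d^k}{dt^k}(1-t^2)^{k+\frac{d-2}{2}}$. $\bar K^\infty$ is the limiting Gram kernel of a two-layer ReLU network with bias (bias initialized at $0$, inputs in homogeneous coordinates $\frac{1}{\sqrt2}(\mathbf{x}^T,1)^T$); by the Funk–Hecke theorem $c_k^d$ is (up to the $k$-independent constant $V_d$) the eigenvalue of convolution with $\bar K^\infty$ on spherical harmonics of degree $k$. $\binom{p}{q}=0$ when $q>p$. *)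

(* Defs.v *)
From Stdlib Require Import Reals Lra Lia Arith List.
Open Scope R_scope.

Inductive nth_deriv : nat -> (R -> R) -> (R -> R) -> Prop :=
| nth_deriv_0 (f : R -> R) : nth_deriv 0 f f
| nth_deriv_S (n : nat) (f g h : R -> R) :
    nth_deriv n f g -> (forall x, derivable_pt_lim g x (h x)) ->
    nth_deriv (S n) f h.

(* Gamma function at a positive integer n : Gamma n = (n-1)!.
   (d is even, so every Gamma value in the statement is at a positive integer.) *)
Definition Gamma_nat (n : nat) : R := INR (fact (n - 1)).

Definition binom (p q : nat) : R := if (q <=? p)%nat then C p q else 0.

(* sum_{q=a}^{b} f q  (empty if b < a) *)
Definition sumR (a b : nat) (f : nat -> R) : R :=
  fold_right Rplus 0 (map f (seq a (S b - a))).

Definition Kbar (t : R) : R := / (4 * PI) * (t + 1) * (PI - acos t).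

Definition hm (d : nat) : nat := ((d - 2) / 2)%nat.

(* Gegenbauer polynomial via Rodrigues' formula, given g = k-th derivative
   of t |-> (1-t^2)^(k + (d-2)/2). *)
Definition Pkd (d k : nat) (g : R -> R) (t : R) : R :=
  (-1) ^ k / 2 ^ k * (Gamma_nat (d / 2) / Gamma_nat (k + d / 2))
  * / (1 - t ^ 2) ^ hm d * g t.

Definition Vd (d : nat) : R := PI ^ (d / 2) / Gamma_nat (d / 2 + 1).

(* "c_k^d = v" : the integral exists and equals v / V_d. *)
Definition ck_is (d k : nat) (v : R) : Prop :=
  exists g : R -> R,
    nth_deriv k (fun t => (1 - t ^ 2) ^ (k + hm d)) g /\
    exists pr : Riemann_integrable
                  (fun t => Kbar t * Pkd d k g t * (1 - t ^ 2) ^ hm d) (-1) 1,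
      Vd d * RiemannInt pr = v.

Definition C1 (d k : nat) : R :=
  PI ^ (d / 2) / INR (d / 2) * ((-1) ^ k / 2 ^ k) * / Gamma_nat (k + d / 2).

Definition C2 (q d k : nat) : R :=
  (-1) ^ q * binom (k + hm d) q * (INR (fact (2 * q)) / INR (fact (2 * q - k))).

Definition c0_formula (d : nat) : R :=
  / 2 * C1 d 0 *
  ( / (INR d * 2 ^ (d + 1)) * binom d (d / 2)
    + 2 ^ (d - 1) / (INR d * binom (d - 1) (d / 2))
    - / 2 * sumR 0 (hm d) (fun q => (-1) ^ q * binom (hm d) q * / INR (2 * q + 1))).

Definition c1_formula (d : nat) : R :=
  / 2 * C1 d 1 *
  sumR 1 (1 + hm d) (fun q => C2 q d 1 *
    ( / (2 * INR (2 * q + 1))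
      + / (4 * INR q) * (1 - / 2 ^ (2 * q) * binom (2 * q) q))).

Definition ck_even_formula (d k : nat) : R :=
  / 2 * C1 d k *
  sumR ((k + 1) / 2) (k + hm d) (fun q => C2 q d k *
    ( - / (2 * INR (2 * q - k + 1))
      + / (2 * INR (2 * q - k + 2))
        * (1 - / 2 ^ (2 * q - k + 2) * binom (2 * q - k + 2) ((2 * q - k + 2) / 2)))).

Definition ck_odd_formula (d k : nat) : R :=
  / 2 * C1 d k *
  sumR ((k + 1) / 2) (k + hm d) (fun q => C2 q d k *
    ( / (2 * INR (2 * q - k + 1))
      * (1 - / 2 ^ (2 * q - k + 1) * binom (2 * q - k + 1) ((2 * q - k + 1) / 2)))).

(* Main.v *)
Require Import Defs.
From Stdlib Require Import Reals Lra Lia Arith List FunctionalExtensionality.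
From Coquelicot Require Import Coquelicot.
Open Scope R_scope.

Definition LS (l : list nat) (f : nat -> R) : R := fold_right Rplus 0 (map f l).

Lemma LS_app l1 l2 f : LS (l1 ++ l2) f = LS l1 f + LS l2 f.
Proof. unfold LS; induction l1; simpl; [lra|rewrite IHl1; lra]. Qed.

Lemma LS_ext l f g : (forall x, In x l -> f x = g x) -> LS l f = LS l g.
Proof.
  unfold LS; induction l; simpl; intros H; auto.
  rewrite H by auto; rewrite IHl; auto.
Qed.

Lemma LS_plus l f g : LS l (fun q => f q + g q) = LS l f + LS l g.
Proof. unfold LS; induction l; simpl; [lra|rewrite IHl; lra]. Qed.

Lemma LS_scal l c f : LS l (fun q => c * f q) = c * LS l f.
Proof. unfold LS; induction l; simpl; [lra|rewrite IHl; lra]. Qed.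

Lemma LS_zero l : LS l (fun _ => 0) = 0.
Proof. unfold LS; induction l; simpl; [lra|rewrite IHl; lra]. Qed.

Lemma LS_seq_S a n f : LS (seq a (S n)) f = LS (seq a n) f + f (a + n)%nat.
Proof. rewrite seq_S, LS_app; unfold LS; simpl; lra. Qed.

Lemma LS_seq_shift a n f : LS (seq (S a) n) f = LS (seq a n) (fun q => f (S q)).
Proof. rewrite <- seq_shift; unfold LS; rewrite map_map; auto. Qed.

Lemma sum_f_R0_LS f n : sum_f_R0 f n = LS (seq 0 (S n)) f.
Proof. induction n; [unfold LS; simpl; lra|]. rewrite LS_seq_S, <- IHn; simpl; auto. Qed.

Lemma derivable_LS l (F dF : nat -> R -> R) x :
  (forall q, In q l -> derivable_pt_lim (F q) x (dF q x)) ->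
  derivable_pt_lim (fun t => LS l (fun q => F q t)) x (LS l (fun q => dF q x)).
Proof.
  induction l; intros H; unfold LS in *; simpl.
  - apply derivable_pt_lim_const.
  - apply (derivable_pt_lim_plus (F a) (fun t => fold_right Rplus 0 (map (fun q => F q t) l))).
    + apply H; simpl; auto.
    + apply IHl; intros; apply H; simpl; auto.
Qed.

Fixpoint ffR (x : R) (j : nat) : R :=
  match j with O => 1 | S j => ffR x j * (x - INR j) end.

Lemma ffR_zero m j : (m < j)%nat -> ffR (INR m) j = 0.
Proof.
  induction j; intros H; [lia|]. simpl.
  destruct (Nat.eq_dec m j) as [->|Hn]; [lra|].
  rewrite IHj by lia; lra.
Qed.

Lemma ffR_fact m j : (j <= m)%nat -> ffR (INR m) j = INR (fact m) / INR (fact (m - j)).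
Proof.
  induction j; intros H; simpl.
  - rewrite Nat.sub_0_r; field; apply INR_fact_neq_0.
  - rewrite IHj by lia.
    replace (m - j)%nat with (S (m - S j)) by lia.
    rewrite fact_simpl, mult_INR.
    replace (INR m - INR j) with (INR (S (m - S j))).
    + field; split; [apply INR_fact_neq_0| apply not_0_INR; lia].
    + replace (S (m - S j)) with (m - j)%nat by lia. rewrite minus_INR by lia; auto.
Qed.

Definition Gk (n k : nat) (t : R) : R :=
  LS (seq 0 (S n)) (fun q => (-1) ^ q * Binomial.C n q * ffR (INR (2 * q)) k * t ^ (2 * q - k)).

Lemma Gk_deriv n k x : derivable_pt_lim (Gk n k) x (Gk n (S k) x).
Proof.
  unfold Gk.
  apply derivable_LS with
    (F := fun q t => (-1) ^ q * Binomial.C n q * ffR (INR (2 * q)) k * t ^ (2 * q - k))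
    (dF := fun q t => (-1) ^ q * Binomial.C n q * ffR (INR (2 * q)) (S k) * t ^ (2 * q - S k)).
  intros q _.
  set (c := (-1) ^ q * Binomial.C n q).
  replace (c * ffR (INR (2 * q)) (S k) * x ^ (2 * q - S k))
    with (c * ffR (INR (2 * q)) k * (INR (2 * q - k) * x ^ Nat.pred (2 * q - k))).
  - apply derivable_pt_lim_scal, derivable_pt_lim_pow.
  - change (ffR (INR (2 * q)) (S k)) with (ffR (INR (2 * q)) k * (INR (2 * q) - INR k)).
    destruct (le_lt_dec k (2 * q)) as [Hk|Hk].
    + rewrite minus_INR by lia. replace (Nat.pred (2 * q - k)) with (2 * q - S k)%nat by lia. ring.
    + rewrite ffR_zero by lia. ring.
Qed.

Lemma Gk_nth n k : nth_deriv k (Gk n 0) (Gk n k).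
Proof.
  induction k.
  - constructor.
  - econstructor; [apply IHk|]. intros; apply Gk_deriv.
Qed.

Lemma Gk0 n : (fun t => (1 - t ^ 2) ^ n) = Gk n 0.
Proof.
  apply functional_extensionality; intros t.
  replace (1 - t ^ 2) with (- t ^ 2 + 1) by ring.
  rewrite binomial, sum_f_R0_LS. unfold Gk. apply LS_ext; intros q _.
  rewrite pow1, Nat.sub_0_r. change (ffR (INR (2 * q)) 0) with 1.
  replace (- t ^ 2) with ((-1) * t ^ 2) by ring. rewrite Rpow_mult_distr, <- pow_mult. ring.
Qed.

Lemma nth_deriv_poly n k : nth_deriv k (fun t => (1 - t ^ 2) ^ n) (Gk n k).
Proof. rewrite Gk0; apply Gk_nth. Qed.

Lemma is_RInt_lin (f g : R -> R) a b If Ig al be :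
  is_RInt f a b If -> is_RInt g a b Ig ->
  is_RInt (fun x => al * f x + be * g x) a b (al * If + be * Ig).
Proof.
  intros Hf Hg.
  exact (is_RInt_plus _ _ _ _ _ _ (is_RInt_scal _ _ _ al _ Hf) (is_RInt_scal _ _ _ be _ Hg)).
Qed.

Lemma FTC (F f : R -> R) a b :
  (forall x, is_derive F x (f x)) -> (forall x, continuous f x) ->
  is_RInt f a b (F b - F a).
Proof.
  intros H1 H2. exact (is_RInt_derive F f a b (fun x _ => H1 x) (fun x _ => H2 x)).
Qed.


Ltac fix_match :=
  repeat match goal with |- context [match ?j with 0%nat => 1 | S _ => INR ?j + 1 end] =>
    replace (match j with 0%nat => 1 | S _ => INR j + 1 end) with (INR (S j)) by (destruct j; simpl; lra) end.

Lemma sc x : sin x * sin x = 1 - cos x * cos x.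
Proof. generalize (sin2_cos2 x); unfold Rsqr; lra. Qed.

Lemma cont_cospow j x : continuous (fun t => cos t ^ j) x.
Proof. apply (ex_derive_continuous (fun t => cos t ^ j)); auto_derive; auto. Qed.
Lemma cont_sinpow j x : continuous (fun t => sin t ^ j) x.
Proof. apply (ex_derive_continuous (fun t => sin t ^ j)); auto_derive; auto. Qed.

Definition W (j : nat) : R := RInt (fun t => cos t ^ j) 0 PI.
Definition V (j : nat) : R := RInt (fun t => sin t ^ j) 0 PI.

Lemma W_is j : is_RInt (fun t => cos t ^ j) 0 PI (W j).
Proof. apply (RInt_correct (fun t => cos t ^ j)), ex_RInt_continuous; intros; apply cont_cospow. Qed.
Lemma V_is j : is_RInt (fun t => sin t ^ j) 0 PI (V j).
Proof. apply (RInt_correct (fun t => sin t ^ j)), ex_RInt_continuous; intros; apply cont_sinpow. Qed.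


Lemma is_RInt_eq (f : R -> R) a b (v1 v2 : R) : is_RInt f a b v1 -> is_RInt f a b v2 -> v1 = v2.
Proof. intros H1 H2. pose proof (is_RInt_unique _ _ _ _ H1). pose proof (is_RInt_unique _ _ _ _ H2). congruence. Qed.

Lemma is_RInt_val (f : R -> R) a b (v1 v2 : R) : is_RInt f a b v1 -> v1 = v2 -> is_RInt f a b v2.
Proof. intros H ->; auto. Qed.

Lemma W_rec j : (INR j + 2) * W (j + 2) - (INR j + 1) * W j = 0.
Proof.
  set (df := fun t => (INR j + 2) * cos t ^ (j + 2) + (- (INR j + 1)) * cos t ^ j).
  assert (H := FTC (fun t => cos t ^ (S j) * sin t) df 0 PI).
  cbv beta in H. rewrite sin_0, sin_PI in H.
  assert (H2 := is_RInt_lin _ _ 0 PI _ _ (INR j + 2) (- (INR j + 1)) (W_is (j+2)) (W_is j)).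
  replace ((INR j + 2) * W (j + 2) - (INR j + 1) * W j) with
    ((INR j + 2) * W (j + 2) + - (INR j + 1) * W j) by ring.
  assert (H1 : is_RInt df 0 PI 0).
  { apply (is_RInt_val _ _ _ (cos PI ^ S j * 0 - cos 0 ^ S j * 0)); [|ring]. apply H.
  - intros x. unfold df. auto_derive; auto. fix_match. rewrite S_INR, pow_add.
    replace (cos x ^ 2) with (cos x * cos x) by ring.
    replace (1 * - sin x * ((INR j + 1) * cos x ^ j) * sin x) with (- (INR j + 1) * cos x ^ j * (sin x * sin x)) by ring.
    rewrite sc. ring.
  - intros x. unfold df. apply (ex_derive_continuous (fun t => (INR j + 2) * cos t ^ (j + 2) + (- (INR j + 1)) * cos t ^ j)); auto_derive; auto. }
  exact (is_RInt_eq _ _ _ _ _ H2 H1).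
Qed.

Lemma V_rec j : (INR j + 1) * V j - (INR j + 2) * V (j + 2) = 0.
Proof.
  set (df := fun t => (INR j + 1) * sin t ^ j + (- (INR j + 2)) * sin t ^ (j + 2)).
  assert (H := FTC (fun t => sin t ^ (S j) * cos t) df 0 PI).
  cbv beta in H.
  assert (H2 := is_RInt_lin _ _ 0 PI _ _ (INR j + 1) (- (INR j + 2)) (V_is j) (V_is (j+2))).
  replace ((INR j + 1) * V j - (INR j + 2) * V (j + 2)) with
    ((INR j + 1) * V j + - (INR j + 2) * V (j + 2)) by ring.
  assert (H1 : is_RInt df 0 PI 0).
  { apply (is_RInt_val _ _ _ (sin PI ^ S j * cos PI - sin 0 ^ S j * cos 0)); [|rewrite sin_0, sin_PI; simpl; ring]. apply H.
  - intros x. unfold df. auto_derive; auto. fix_match. rewrite S_INR, pow_add.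
    replace (sin x ^ 2) with (sin x * sin x) by ring.
    replace (1 * cos x * ((INR j + 1) * sin x ^ j) * cos x) with ((INR j + 1) * sin x ^ j * (cos x * cos x)) by ring.
    replace (cos x * cos x) with (1 - sin x * sin x) by (rewrite sc; ring). ring.
  - intros x. unfold df. apply (ex_derive_continuous (fun t => (INR j + 1) * sin t ^ j + (- (INR j + 2)) * sin t ^ (j + 2))); auto_derive; auto. }
  exact (is_RInt_eq _ _ _ _ _ H2 H1).
Qed.

Lemma W0 : W 0 = PI.
Proof.
  apply (is_RInt_eq _ 0 PI _ _ (W_is 0)).
  apply (is_RInt_val _ _ _ (PI - 0)); [|ring].
  apply (FTC (fun t => t)); intros x; [auto_derive; auto|apply (cont_cospow 0)].
Qed.
Lemma V0 : V 0 = PI.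
Proof.
  apply (is_RInt_eq _ 0 PI _ _ (V_is 0)).
  apply (is_RInt_val _ _ _ (PI - 0)); [|ring].
  apply (FTC (fun t => t)); intros x; [auto_derive; auto|apply (cont_sinpow 0)].
Qed.
Lemma W1 : W 1 = 0.
Proof.
  apply (is_RInt_eq _ 0 PI _ _ (W_is 1)).
  apply (is_RInt_val _ _ _ (sin PI - sin 0)); [|rewrite sin_0, sin_PI; ring].
  apply (FTC sin); intros x; [auto_derive; auto; ring|apply (cont_cospow 1)].
Qed.
Lemma V1 : V 1 = 2.
Proof.
  apply (is_RInt_eq _ 0 PI _ _ (V_is 1)).
  apply (is_RInt_val _ _ _ (- cos PI - - cos 0)); [|rewrite cos_0, cos_PI; ring].
  apply (FTC (fun t => - cos t)); intros x; [auto_derive; auto; ring|apply (cont_sinpow 1)].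
Qed.

Definition cR (r : nat) : R := Binomial.C (2 * r) r / 2 ^ (2 * r).

Lemma cR_S r : cR (S r) = cR r * (2 * INR r + 1) / (2 * INR r + 2).
Proof.
  unfold cR, Binomial.C.
  replace (2 * S r)%nat with (S (S (2 * r))) by lia.
  replace (S (S (2 * r)) - S r)%nat with (S r) by lia.
  replace (2 * r - r)%nat with r by lia.
  rewrite !fact_simpl, !mult_INR, !S_INR, mult_INR.
  replace (2 ^ S (S (2 * r))) with (4 * 2 ^ (2 * r)) by (simpl; ring).
  simpl INR.
  assert (INR (fact r) <> 0) by apply INR_fact_neq_0.
  assert (INR (fact (2 * r)) <> 0) by apply INR_fact_neq_0.
  assert (0 <= INR r) by apply pos_INR.
  assert (2 ^ (2 * r) <> 0) by (apply pow_nonzero; lra).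
  field. repeat split; auto; lra.
Qed.

Lemma cR_pos r : 0 < cR r.
Proof.
  induction r.
  - unfold cR, Binomial.C; simpl; lra.
  - rewrite cR_S. assert (0 <= INR r) by apply pos_INR.
    apply Rmult_lt_0_compat; [|apply Rinv_0_lt_compat; lra].
    apply Rmult_lt_0_compat; lra.
Qed.

Lemma W_even r : W (2 * r) = PI * cR r.
Proof.
  induction r.
  - simpl. rewrite W0. unfold cR, Binomial.C; simpl; field.
  - rewrite cR_S. assert (H := W_rec (2 * r)).
    replace (2 * r + 2)%nat with (2 * S r)%nat in H by lia.
    rewrite IHr, mult_INR in H. simpl INR in H.
    assert (0 <= INR r) by apply pos_INR.
    apply (Rmult_eq_reg_l (2 * INR r + 2)); [|lra].
    field_simplify; [|lra]. lra.
Qed.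

Lemma W_odd r : W (2 * r + 1) = 0.
Proof.
  induction r.
  - simpl. apply W1.
  - assert (H := W_rec (2 * r + 1)).
    replace (2 * r + 1 + 2)%nat with (2 * S r + 1)%nat in H by lia.
    rewrite IHr in H. assert (0 <= INR (2 * r + 1)) by apply pos_INR.
    apply (Rmult_eq_reg_l (INR (2 * r + 1) + 2)); lra.
Qed.

Lemma V_even r : V (2 * r) = PI * cR r.
Proof.
  induction r.
  - simpl. rewrite V0. unfold cR, Binomial.C; simpl; field.
  - rewrite cR_S. assert (H := V_rec (2 * r)).
    replace (2 * r + 2)%nat with (2 * S r)%nat in H by lia.
    rewrite IHr, mult_INR in H. simpl INR in H.
    assert (0 <= INR r) by apply pos_INR.
    apply (Rmult_eq_reg_l (2 * INR r + 2)); [|lra].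
    field_simplify; [|lra]. lra.
Qed.

Lemma lin_solve a b X Y : a * Y - b * X = 0 -> b <> 0 -> X = a * Y / b.
Proof. intros H Hb. apply (Rmult_eq_reg_l b); auto. field_simplify; auto. lra. Qed.

Lemma V_odd r : V (2 * r + 1) = 2 / ((2 * INR r + 1) * cR r).
Proof.
  induction r.
  - simpl. rewrite V1. unfold cR, Binomial.C; simpl; field.
  - assert (H := V_rec (2 * r + 1)).
    replace (2 * r + 1 + 2)%nat with (2 * S r + 1)%nat in H by lia.
    rewrite IHr in H. rewrite cR_S, S_INR.
    assert (0 <= INR r) by apply pos_INR. assert (0 < cR r) by apply cR_pos.
    rewrite plus_INR, mult_INR in H. simpl INR in H.
    apply lin_solve in H; [|lra]. rewrite H. field. repeat split; lra.
Qed.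

Lemma is_RInt_ext_all (f g : R -> R) a b (l : R) :
  (forall x, f x = g x) -> is_RInt f a b l -> is_RInt g a b l.
Proof. intros H1 H2. exact (is_RInt_ext f g a b l (fun x _ => H1 x) H2). Qed.

Ltac cont_tac := match goal with |- continuous ?f ?x =>
  apply (ex_derive_continuous f); auto_derive; auto end.

Lemma JI m : is_RInt (fun t => (PI - t) * (cos t + 1) * cos t ^ m * sin t) 0 PI
  (PI * (/ (INR m + 2) + / (INR m + 1)) - W (S (S m)) / (INR m + 2) - W (S m) / (INR m + 1)).
Proof.
  assert (Ha : INR m + 2 <> 0) by (generalize (pos_INR m); lra).
  assert (Hb : INR m + 1 <> 0) by (generalize (pos_INR m); lra).
  set (H := fun t => / (INR m + 2) * cos t ^ (S (S m)) + / (INR m + 1) * cos t ^ (S m)).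
  set (dF := fun t => H t + (PI - t) * (cos t ^ (S m) + cos t ^ m) * sin t).
  assert (I1 : is_RInt dF 0 PI (PI * (/ (INR m + 2) + / (INR m + 1)))).
  { apply (is_RInt_val _ _ _ ((fun t => - (PI - t) * H t) PI - (fun t => - (PI - t) * H t) 0)).
    - apply (FTC (fun t => - (PI - t) * H t)); intros x.
      + unfold dF, H. auto_derive; auto. fix_match. rewrite !S_INR. repeat rewrite <- tech_pow_Rmult. field. auto.
      + unfold dF, H. cont_tac.
    - unfold H; cbv beta. rewrite cos_0, !pow1. ring. }
  assert (I2 : is_RInt H 0 PI (/ (INR m + 2) * W (S (S m)) + / (INR m + 1) * W (S m))).
  { apply is_RInt_lin; apply W_is. }
  assert (I3 := is_RInt_lin _ _ _ _ _ _ 1 (-1) I1 I2).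
  eapply is_RInt_val.
  - eapply is_RInt_ext_all; [|exact I3]. intros x. unfold dF. cbv beta. repeat rewrite <- tech_pow_Rmult. ring.
  - unfold Rdiv. ring.
Qed.

Lemma is_RInt_zero a b : is_RInt (fun _ => 0) a b 0.
Proof.
  apply (is_RInt_val _ _ _ ((fun _ : R => 0) b - (fun _ : R => 0) a)); [|ring].
  apply (FTC (fun _ => 0)); intros x; [auto_derive; auto|cont_tac].
Qed.

Lemma Ipi_sin n : is_RInt (fun t => (PI - t) * sin t ^ n) 0 PI (PI / 2 * V n).
Proof.
  set (f := fun t => t * sin t ^ n).
  assert (Ef : ex_RInt f PI 0).
  { apply (ex_RInt_continuous (V:=R_CompleteNormedModule)). intros. unfold f. cont_tac. }
  destruct Ef as [l Hl].
  assert (H1 := is_RInt_comp_lin f (-1) PI 0 PI l).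
  assert (H1' : is_RInt (fun y => scal (-1) (f (-1 * y + PI))) 0 PI l).
  { apply H1. assert (E1 : -1 * 0 + PI = PI) by ring. assert (E2 : -1 * PI + PI = 0) by ring. rewrite E1, E2. exact Hl. }
  assert (E : forall y, scal (-1) (f (-1 * y + PI)) = - ((PI - y) * sin y ^ n)).
  { intros y. unfold f. replace (-1 * y + PI) with (PI - y) by ring. rewrite sin_PI_x. unfold scal; simpl; unfold mult; simpl. ring. }
  assert (H2 : is_RInt (fun t => (PI - t) * sin t ^ n) 0 PI (- l)).
  { assert (H3 := is_RInt_lin _ (fun _ => 0) 0 PI l 0 (-1) 0 H1' (is_RInt_zero 0 PI)).
    eapply is_RInt_val.
    - eapply is_RInt_ext_all; [|exact H3]. intros y. cbv beta. rewrite E. ring.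
    - ring. }
  assert (H3 : is_RInt f 0 PI (- l)).
  { apply is_RInt_swap in Hl. exact Hl. }
  assert (H4 := is_RInt_lin _ _ _ _ _ _ 1 1 H2 H3).
  assert (H5 : is_RInt (fun t => PI * sin t ^ n + 0 * 0) 0 PI (PI * V n + 0 * 0)).
  { apply (is_RInt_lin _ (fun _ => 0)); [apply V_is|apply is_RInt_zero]. }
  assert (E3 : 1 * - l + 1 * - l = PI * V n + 0 * 0).
  { apply (is_RInt_eq (fun t => PI * sin t ^ n + 0 * 0) 0 PI); auto.
    eapply is_RInt_ext_all; [|exact H4]. intros x; unfold f; ring. }
  apply (is_RInt_val _ _ _ _ _ H2). lra.
Qed.

Lemma Ipi_cos_sin j : is_RInt (fun t => (PI - t) * cos t * sin t ^ j) 0 PI (V (S j) / (INR j + 1)).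
Proof.
  assert (Hb : INR j + 1 <> 0) by (generalize (pos_INR j); lra).
  set (dF := fun t => - / (INR j + 1) * sin t ^ (S j) + (PI - t) * cos t * sin t ^ j).
  assert (I1 : is_RInt dF 0 PI 0).
  { apply (is_RInt_val _ _ _ ((fun t => (PI - t) * / (INR j + 1) * sin t ^ (S j)) PI
       - (fun t => (PI - t) * / (INR j + 1) * sin t ^ (S j)) 0)).
    - apply (FTC (fun t => (PI - t) * / (INR j + 1) * sin t ^ (S j))); intros x.
      + unfold dF. auto_derive; auto. fix_match. rewrite !S_INR. repeat rewrite <- tech_pow_Rmult. field. auto.
      + unfold dF. cont_tac.
    - cbv beta. rewrite sin_0, sin_PI. simpl. ring. }
  assert (I2 := is_RInt_lin _ _ _ _ _ _ 1 (/ (INR j + 1)) I1 (V_is (S j))).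
  eapply is_RInt_val.
  - eapply is_RInt_ext_all; [|exact I2]. intros x. unfold dF. ring.
  - unfold Rdiv. ring.
Qed.

Lemma acos_ge1 x : 1 <= x -> acos x = 0.
Proof.
  intros H. unfold acos. destruct (Rle_dec x (-1)); [lra|].
  destruct (Rle_dec 1 x); [auto|lra].
Qed.

Lemma acos_cont1 : continuity_pt acos 1.
Proof.
  intros eps Heps.
  set (e := Rmin eps (PI / 2)).
  assert (He : 0 < e) by (unfold e; apply Rmin_glb_lt; [lra|generalize PI_RGT_0; lra]).
  assert (He2 : e <= PI / 2) by apply Rmin_r.
  assert (He3 : e <= eps) by apply Rmin_l.
  assert (Hc : cos e < 1).
  { rewrite <- cos_0. apply cos_decreasing_1; generalize PI_RGT_0; lra. }
  assert (Hc0 : 0 <= cos e) by (apply cos_ge_0; generalize PI_RGT_0; lra).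
  exists (1 - cos e). split; [lra|].
  intros x [_ Hx]. simpl in *. unfold Rdist in *. rewrite acos_1.
  destruct (Rle_dec 1 x) as [H1|H1].
  - rewrite acos_ge1 by auto. rewrite Rminus_0_r, Rabs_R0. lra.
  - assert (Hx1 : cos e < x) by (apply Rabs_def2 in Hx; lra).
    assert (Hb := acos_bound x).
    rewrite Rminus_0_r, Rabs_pos_eq by lra.
    destruct (Rlt_or_le (acos x) e) as [Hl|Hl]; [lra|].
    exfalso.
    assert (cos (acos x) <= cos e).
    { destruct (Req_dec (acos x) e) as [Heq|Hne]; [rewrite Heq; lra|].
      left. apply cos_decreasing_1; generalize PI_RGT_0; lra. }
    rewrite cos_acos in H by lra. lra.
Qed.

Lemma acos_contm1 : continuity_pt acos (-1).
Proof.
  apply (continuity_pt_ext (fun x => PI - acos (- x))).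
  - intros x. rewrite acos_opp. ring.
  - apply (continuity_pt_minus (fun _ => PI) (fun x => acos (- x))).
    + apply continuity_pt_const. intros a b; auto.
    + apply (continuity_pt_comp (fun x => - x) acos).
      * apply (continuity_pt_opp id), continuity_pt_id.
      * replace (- -1) with 1 by ring. apply acos_cont1.
Qed.

Lemma acos_cont x : -1 <= x <= 1 -> continuity_pt acos x.
Proof.
  intros H. destruct (Req_dec x 1) as [->|H1]; [apply acos_cont1|].
  destruct (Req_dec x (-1)) as [->|H2]; [apply acos_contm1|].
  apply derivable_continuous_pt, derivable_pt_acos. lra.
Qed.

Lemma Kbar_cont x : -1 <= x <= 1 -> continuity_pt Kbar x.
Proof.
  intros H. unfold Kbar.
  apply (continuity_pt_mult (fun t => / (4 * PI) * (t + 1)) (fun t => PI - acos t)).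
  - apply (continuity_pt_mult (fun _ => / (4 * PI)) (fun t => t + 1)).
    + apply continuity_pt_const. intros a b; auto.
    + apply (continuity_pt_plus id (fun _ => 1)); [apply continuity_pt_id|apply continuity_pt_const; intros a b; auto].
  - apply (continuity_pt_minus (fun _ => PI) acos); [apply continuity_pt_const; intros a b; auto|apply acos_cont; auto].
Qed.

Lemma subst_lemma (P : R -> R) (v : R) :
  (forall x, continuity_pt P x) ->
  is_RInt (fun t => / (4 * PI) * (cos t + 1) * (PI - t) * P (cos t) * sin t) 0 PI v ->
  is_RInt (fun t => Kbar t * P t) (-1) 1 v.
Proof.
  intros HP Hv.
  set (f := fun t => Kbar t * P t).
  assert (Hc : forall x, -1 <= x <= 1 -> continuous f x).
  { intros x Hx. apply continuity_pt_filterlim.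
    apply (continuity_pt_mult Kbar P); [apply Kbar_cont; auto|apply HP]. }
  assert (Hcomp := is_RInt_comp f cos (fun t => - sin t) 0 PI).
  rewrite cos_0, cos_PI in Hcomp.
  assert (Hr : Rmin 0 PI = 0 /\ Rmax 0 PI = PI).
  { generalize PI_RGT_0; intros; split; [apply Rmin_left|apply Rmax_right]; lra. }
  destruct Hr as [Hr1 Hr2].
  assert (H1 : is_RInt (fun y => scal (- sin y) (f (cos y))) 0 PI (RInt f 1 (-1))).
  { apply Hcomp.
    - intros x Hx. apply Hc. split; [apply COS_bound|apply COS_bound].
    - intros x Hx. split.
      + auto_derive; auto; ring.
      + apply (ex_derive_continuous (fun t => - sin t)); auto_derive; auto. }
  assert (H2 : is_RInt (fun y => scal (- sin y) (f (cos y))) 0 PI (- v)).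
  { apply (is_RInt_ext (fun y => scal (-1) (/ (4 * PI) * (cos y + 1) * (PI - y) * P (cos y) * sin y))).
    - rewrite Hr1, Hr2. intros x Hx. unfold f, Kbar. rewrite acos_cos by lra.
      unfold scal; simpl; unfold mult; simpl. ring.
    - apply (is_RInt_scal _ _ _ (-1)) in Hv.
      replace (- v) with (scal (-1) v); auto.
      unfold scal; simpl; unfold mult; simpl. ring. }
  assert (E : RInt f 1 (-1) = - v).
  { pose proof (is_RInt_unique _ _ _ _ H1). pose proof (is_RInt_unique _ _ _ _ H2). congruence. }
  assert (Ex : ex_RInt f 1 (-1)).
  { apply (ex_RInt_continuous (V:=R_CompleteNormedModule)). intros z Hz. apply Hc.
    rewrite Rmin_right, Rmax_left in Hz by lra. lra. }
  assert (Ex2 := RInt_correct (V:=R_CompleteNormedModule) f 1 (-1) Ex). clear Ex. rename Ex2 into Ex. rewrite E in Ex.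
  apply is_RInt_swap in Ex.
  replace v with (opp (- v)); auto.
  unfold opp; simpl. ring.
Qed.

Lemma C_n_n n : Binomial.C n n = 1.
Proof. unfold Binomial.C. rewrite Nat.sub_diag. simpl. field. apply INR_fact_neq_0. Qed.
Lemma C_n_0 n : Binomial.C n 0 = 1.
Proof. unfold Binomial.C. rewrite Nat.sub_0_r. simpl. field. apply INR_fact_neq_0. Qed.

Lemma binom_le n q : (q <= n)%nat -> binom n q = Binomial.C n q.
Proof. intros H. unfold binom. apply Nat.leb_le in H. rewrite H. auto. Qed.
Lemma binom_gt n q : (n < q)%nat -> binom n q = 0.
Proof. intros H. unfold binom. destruct (Nat.leb_spec q n); [lia|auto]. Qed.

Lemma binom_pascal n q : binom (S n) (S q) = binom n q + binom n (S q).
Proof.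
  destruct (lt_eq_lt_dec q n) as [[H|H]|H].
  - rewrite !binom_le by lia. symmetry; apply pascal; auto.
  - subst q. rewrite (binom_gt n (S n)) by lia. rewrite !binom_le by lia. rewrite !C_n_n. ring.
  - rewrite !binom_gt by lia. ring.
Qed.

Lemma binom_0 n : binom n 0 = 1.
Proof. rewrite binom_le by lia. apply C_n_0. Qed.

Definition alt (n : nat) (f : nat -> R) : R :=
  LS (seq 0 (S n)) (fun q => (-1) ^ q * binom n q * f q).

Definition Dl (f : nat -> R) (q : nat) : R := f (S q) - f q.

Lemma LS_cons a l f : LS (a :: l) f = f a + LS l f.
Proof. reflexivity. Qed.

Lemma alt_ext_range n f : alt n f = LS (seq 0 (S (S n))) (fun q => (-1) ^ q * binom n q * f q).
Proof.
  unfold alt. rewrite (LS_seq_S 0 (S n)). simpl (0 + S n)%nat.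
  rewrite binom_gt by lia. ring.
Qed.

Lemma alt_S n f : alt (S n) f = alt n f - alt n (fun q => f (S q)).
Proof.
  assert (HA : LS (seq 0 (S n)) (fun q => (-1) ^ (S q) * binom n (S q) * f (S q)) = alt n f - f 0%nat).
  { rewrite (alt_ext_range n f). change (seq 0 (S (S n))) with (0%nat :: seq 1 (S n)).
    rewrite LS_cons, (LS_seq_shift 0 (S n) (fun q => (-1) ^ q * binom n q * f q)).
    rewrite binom_0. simpl pow. ring. }
  unfold alt at 1. change (seq 0 (S (S n))) with (0%nat :: seq 1 (S n)). rewrite LS_cons, LS_seq_shift.
  rewrite (LS_ext _ _ (fun q => -1 * ((-1) ^ q * binom n q * f (S q)) + (-1) ^ (S q) * binom n (S q) * f (S q))).
  2:{ intros q _. rewrite binom_pascal. simpl pow. ring. }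
  rewrite LS_plus, LS_scal, HA. rewrite binom_0. unfold alt. simpl pow. ring.
Qed.

Lemma alt_D n f : alt (S n) f = - alt n (Dl f).
Proof.
  rewrite alt_S.
  assert (E : alt n (Dl f) = alt n (fun q => f (S q)) + -1 * alt n f).
  { unfold alt. rewrite <- LS_scal, <- LS_plus. apply LS_ext; intros; unfold Dl; ring. }
  rewrite E. ring.
Qed.

Fixpoint poly_le (j : nat) (f : nat -> R) : Prop :=
  match j with
  | O => forall q, f (S q) = f q
  | S j => poly_le j (Dl f)
  end.

Lemma poly_le_ext j : forall f g, (forall q, f q = g q) -> poly_le j f -> poly_le j g.
Proof.
  induction j; simpl; intros f g H Hf.
  - intros q; rewrite <- !H; auto.
  - apply (IHj (Dl f)); auto. intros q; unfold Dl; rewrite !H; auto.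
Qed.

Lemma poly_le_plus j : forall f g, poly_le j f -> poly_le j g -> poly_le j (fun q => f q + g q).
Proof.
  induction j; simpl; intros f g Hf Hg.
  - intros q; rewrite Hf, Hg; auto.
  - apply (poly_le_ext j (fun q => Dl f q + Dl g q)); [intros; unfold Dl; ring|]. apply IHj; auto.
Qed.

Lemma poly_le_scal j : forall c f, poly_le j f -> poly_le j (fun q => c * f q).
Proof.
  induction j; simpl; intros c f Hf.
  - intros q; rewrite Hf; auto.
  - apply (poly_le_ext j (fun q => c * Dl f q)); [intros; unfold Dl; ring|]. apply IHj; auto.
Qed.

Lemma poly_le_mono j : forall f, poly_le j f -> poly_le (S j) f.
Proof.
  induction j; simpl; intros f Hf.
  - intros q; unfold Dl; rewrite !Hf; ring.
  - apply IHj; auto.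
Qed.

Lemma poly_le_const_val f : poly_le 0 f -> forall q, f q = f 0%nat.
Proof. simpl; intros H q; induction q; auto. rewrite H; auto. Qed.

Lemma poly_le_mul_lin j : forall f a b, poly_le j f -> poly_le (S j) (fun q => f q * (a * INR q + b)).
Proof.
  induction j; intros f a b Hf.
  - simpl. intros q. unfold Dl. rewrite !S_INR.
    rewrite (poly_le_const_val f Hf (S (S q))), (poly_le_const_val f Hf (S q)), (poly_le_const_val f Hf q). ring.
  - change (poly_le (S j) (Dl (fun q => f q * (a * INR q + b)))).
    apply (poly_le_ext (S j) (fun q => Dl f q * (a * INR q + (a + b)) + a * f q)).
    { intros q. unfold Dl. rewrite S_INR. ring. }
    apply poly_le_plus.
    + apply IHj. exact Hf.
    + apply poly_le_scal. exact Hf.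
Qed.

Lemma alt_vanish n : forall j f, poly_le j f -> (j < n)%nat -> alt n f = 0.
Proof.
  induction n; intros j f Hf Hj; [lia|].
  rewrite alt_D. destruct j as [|j].
  - unfold alt. rewrite (LS_ext _ _ (fun _ => 0)); [rewrite LS_zero; ring|].
    intros q _. simpl in Hf. unfold Dl. rewrite Hf. ring.
  - rewrite (IHn j); [ring| exact Hf | lia].
Qed.

Lemma ffR_poly j : poly_le j (fun q => ffR (INR (2 * q)) j).
Proof.
  induction j.
  - simpl. auto.
  - apply (poly_le_ext (S j) (fun q => ffR (INR (2 * q)) j * (2 * INR q + - INR j))).
    + intros q. change (ffR (INR (2 * q)) (S j)) with (ffR (INR (2 * q)) j * (INR (2 * q) - INR j)). rewrite mult_INR. simpl (INR 2). ring.
    + apply poly_le_mul_lin; auto.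
Qed.

Lemma is_RInt_scal' (f : R -> R) a b (v c : R) : is_RInt f a b v -> is_RInt (fun x => c * f x) a b (c * v).
Proof.
  intros H. eapply is_RInt_val.
  - eapply is_RInt_ext_all; [|exact (is_RInt_lin _ _ _ _ _ _ c 0 H (is_RInt_zero a b))]. intros; cbv beta; ring.
  - ring.
Qed.

Lemma is_RInt_LS l (F : nat -> R -> R) a b (v : nat -> R) :
  (forall q, In q l -> is_RInt (F q) a b (v q)) ->
  is_RInt (fun x => LS l (fun q => F q x)) a b (LS l v).
Proof.
  induction l; intros H.
  - unfold LS; simpl. apply is_RInt_zero.
  - unfold LS in *; simpl.
    eapply is_RInt_val.
    + eapply is_RInt_ext_all; [|exact (is_RInt_lin _ _ _ _ _ _ 1 1 (H a0 (or_introl eq_refl)) (IHl (fun q Hq => H q (or_intror Hq))))].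
      intros; cbv beta; ring.
    + ring.
Qed.

Lemma main_ck (d k : nat) (v : R) :
  is_RInt (fun t => Kbar t * Gk (k + hm d) k t) (-1) 1 v ->
  ck_is d k (Vd d * (((-1) ^ k / 2 ^ k * (Gamma_nat (d / 2)%nat / Gamma_nat (k + d / 2)%nat)) * v)).
Proof.
  intros Hv. exists (Gk (k + hm d) k). split; [apply nth_deriv_poly|].
  set (c := (-1) ^ k / 2 ^ k * (Gamma_nat (d / 2)%nat / Gamma_nat (k + d / 2)%nat)).
  assert (H2 : is_RInt (fun t => Kbar t * Pkd d k (Gk (k + hm d) k) t * (1 - t ^ 2) ^ hm d) (-1) 1 (c * v)).
  { assert (E : forall x, -1 < x < 1 -> c * (Kbar x * Gk (k + hm d) k x) =
        Kbar x * Pkd d k (Gk (k + hm d) k) x * (1 - x ^ 2) ^ hm d).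
    { intros x Hx. assert (Hn : (1 - x ^ 2) ^ hm d <> 0) by (apply pow_nonzero; nra).
      unfold Pkd. fold c. field. auto. }
    apply (is_RInt_ext (fun t => c * (Kbar t * Gk (k + hm d) k t))).
    - rewrite Rmin_left, Rmax_right by lra. exact E.
    - apply is_RInt_scal'; auto. }
  exists (ex_RInt_Reals_0 _ _ _ (ex_intro _ _ H2)).
  rewrite <- RInt_Reals. rewrite (is_RInt_unique _ _ _ _ H2). ring.
Qed.

Definition Jv (m : nat) : R :=
  / (4 * PI) * (PI * (/ (INR m + 2) + / (INR m + 1)) - W (S (S m)) / (INR m + 2) - W (S m) / (INR m + 1)).

Definition coef (n k q : nat) : R := (-1) ^ q * Binomial.C n q * ffR (INR (2 * q)) k.

Lemma theta_Gk n k :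
  is_RInt (fun t => / (4 * PI) * (cos t + 1) * (PI - t) * Gk n k (cos t) * sin t) 0 PI
    (LS (seq 0 (S n)) (fun q => coef n k q * Jv (2 * q - k))).
Proof.
  eapply is_RInt_ext_all; [|apply (is_RInt_LS _ (fun q t => coef n k q * (/ (4 * PI) * ((PI - t) * (cos t + 1) * cos t ^ (2 * q - k) * sin t))))].
  - intros x. cbv beta. unfold Gk.
    rewrite <- (LS_scal _ (/ (4 * PI) * (cos x + 1) * (PI - x))).
    rewrite <- (Rmult_comm (sin x)), <- LS_scal. apply LS_ext. intros q _. unfold coef. ring.
  - intros q _. apply is_RInt_scal'. unfold Jv. apply is_RInt_scal'. apply JI.
Qed.

Lemma Jv_even r : Jv (2 * r) = / 2 * (/ (2 * (2 * INR r + 1)) + / (2 * (2 * INR r + 2)) * (1 - cR (S r))).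
Proof.
  unfold Jv. replace (S (S (2 * r))) with (2 * S r)%nat by lia.
  replace (S (2 * r)) with (2 * r + 1)%nat by lia.
  rewrite W_even, W_odd, mult_INR. simpl (INR 2).
  assert (0 <= INR r) by apply pos_INR. assert (PI > 0) by apply PI_RGT_0.
  field. repeat split; lra.
Qed.

Lemma Jv_odd r : Jv (2 * r + 1) = / 2 * (/ (2 * (2 * INR r + 3)) + / (2 * (2 * INR r + 2)) * (1 - cR (S r))).
Proof.
  unfold Jv. replace (S (S (2 * r + 1))) with (2 * S r + 1)%nat by lia.
  replace (S (2 * r + 1)) with (2 * S r)%nat by lia.
  rewrite W_even, W_odd, plus_INR, mult_INR. simpl (INR 2). simpl (INR 1).
  assert (0 <= INR r) by apply pos_INR. assert (PI > 0) by apply PI_RGT_0.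
  field. repeat split; lra.
Qed.

Lemma half_even (d : nat) : Nat.Even d -> (2 <= d)%nat -> exists m : nat, (d = 2 * S m /\ d / 2 = S m /\ hm d = m)%nat.
Proof.
  intros [m Hm] Hd. subst d. destruct m; [lia|]. exists m. split; auto.
  unfold hm. split.
  - rewrite Nat.mul_comm, Nat.div_mul; lia.
  - replace (2 * S m - 2)%nat with (m * 2)%nat by lia. rewrite Nat.div_mul; lia.
Qed.

Lemma C1_eq (d k : nat) : Nat.Even d -> (2 <= d)%nat ->
  Vd d * ((-1) ^ k / 2 ^ k * (Gamma_nat (d / 2)%nat / Gamma_nat (k + d / 2)%nat)) = Defs.C1 d k.
Proof.
  intros He Hd. destruct (half_even d He Hd) as [m [Hm1 [Hm2 Hm3]]].
  unfold Vd, Defs.C1, Gamma_nat. rewrite Hm2.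
  replace (S m + 1 - 1)%nat with (S m) by lia. replace (S m - 1)%nat with m by lia.
  rewrite fact_simpl, mult_INR.
  assert (INR (fact m) <> 0) by apply INR_fact_neq_0.
  assert (INR (fact (k + S m - 1)) <> 0) by apply INR_fact_neq_0.
  assert (INR (S m) <> 0) by (apply not_0_INR; lia).
  assert (2 ^ k <> 0) by (apply pow_nonzero; lra).
  field. auto.
Qed.

Lemma ck_val (d k : nat) (v : R) : (2 <= d)%nat -> Nat.Even d ->
  is_RInt (fun t => / (4 * PI) * (cos t + 1) * (PI - t) * Gk (k + hm d) k (cos t) * sin t) 0 PI v ->
  ck_is d k (Defs.C1 d k * v).
Proof.
  intros Hd He Hv. rewrite <- C1_eq by auto. rewrite Rmult_assoc.
  apply main_ck. apply subst_lemma; auto.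
  intros x. apply derivable_continuous_pt.
  exists (Gk (k + hm d) (S k) x). apply Gk_deriv.
Qed.

Lemma sumR_LS a b f : sumR a b f = LS (seq a (S b - a)) f.
Proof. reflexivity. Qed.

Lemma ck_is_eq d k v1 v2 : ck_is d k v1 -> v1 = v2 -> ck_is d k v2.
Proof. intros H ->; auto. Qed.

Lemma LS_zero_in l f : (forall q, In q l -> f q = 0) -> LS l f = 0.
Proof. intros H. rewrite (LS_ext _ _ (fun _ => 0)) by auto. apply LS_zero. Qed.

Lemma LS_split_low n s f : (s <= S n)%nat -> (forall q, (q < s)%nat -> f q = 0) ->
  LS (seq 0 (S n)) f = LS (seq s (S n - s)) f.
Proof.
  intros Hs Hf. replace (S n) with (s + (S n - s))%nat at 1 by lia.
  rewrite seq_app, LS_app. simpl (0 + s)%nat.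
  rewrite LS_zero_in; [ring|]. intros q Hq. apply in_seq in Hq. apply Hf; lia.
Qed.

Lemma case_k1 d : (2 <= d)%nat -> Nat.Even d -> ck_is d 1 (c1_formula d).
Proof.
  intros Hd He.
  eapply ck_is_eq; [apply (ck_val d 1 _ Hd He (theta_Gk (1 + hm d) 1))|].
  unfold c1_formula. rewrite sumR_LS.
  rewrite (LS_split_low _ 1).
  2: lia.
  2:{ intros q Hq. replace q with 0%nat by lia. unfold coef. rewrite ffR_zero by (simpl; lia). ring. }
  rewrite <- !LS_scal. apply LS_ext. intros q Hq. apply in_seq in Hq.
  destruct q as [|r]; [lia|].
  replace (2 * S r - 1)%nat with (2 * r + 1)%nat by lia. rewrite Jv_odd.
  unfold coef, C2. rewrite !binom_le by lia. rewrite ffR_fact by lia. unfold cR.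
  rewrite !plus_INR, !mult_INR, !S_INR. simpl (INR 2). simpl (INR 1).
  assert (0 <= INR r) by apply pos_INR.
  assert (INR (fact (2 * S r)) <> 0) by apply INR_fact_neq_0.
  assert (INR (fact (2 * S r - 1)) <> 0) by apply INR_fact_neq_0.
  assert (2 ^ (2 * S r) <> 0) by (apply pow_nonzero; lra).
  rewrite ?INR_0. field. repeat split; lra.
Qed.

Lemma alt_LS n f : alt n f = LS (seq 0 (S n)) (fun q => (-1) ^ q * binom n q * f q).
Proof. reflexivity. Qed.

Lemma case_even d k : (2 <= d)%nat -> Nat.Even d -> (2 <= k)%nat -> Nat.Even k -> ck_is d k (ck_even_formula d k).
Proof.
  intros Hd He Hk [k2 Hk2]. subst k.
  eapply ck_is_eq; [apply (ck_val d (2 * k2) _ Hd He (theta_Gk (2 * k2 + hm d) (2 * k2)))|].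
  unfold ck_even_formula. rewrite sumR_LS.
  replace ((2 * k2 + 1) / 2)%nat with k2 by (apply (Nat.div_unique _ _ _ 1); lia).
  set (n := (2 * k2 + hm d)%nat).
  rewrite (LS_split_low _ k2).
  2: lia.
  2:{ intros q Hq. unfold coef. rewrite ffR_zero by lia. ring. }
  set (E := fun q => (-1) ^ q * binom n q * ffR (INR (2 * q)) (2 * k2 - 1)).
  assert (HE : LS (seq k2 (S n - k2)) E = 0).
  { rewrite <- LS_split_low.
    - unfold E. rewrite <- alt_LS. apply (alt_vanish n (2 * k2 - 1)); [apply ffR_poly|]. unfold n; lia.
    - lia.
    - intros q Hq. unfold E. rewrite ffR_zero by lia. ring. }
  rewrite (LS_ext _ (fun q => coef n (2 * k2) q * Jv (2 * q - 2 * k2))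
     (fun q => / 2 * (C2 q d (2 * k2) * (- / (2 * INR (2 * q - 2 * k2 + 1)) + / (2 * INR (2 * q - 2 * k2 + 2)) *
        (1 - / 2 ^ (2 * q - 2 * k2 + 2) * binom (2 * q - 2 * k2 + 2) ((2 * q - 2 * k2 + 2) / 2)))) + / 2 * E q)).
  { rewrite LS_plus, !LS_scal, HE. ring. }
  intros q Hq. apply in_seq in Hq.
  destruct (Nat.le_exists_sub k2 q) as [r [Hr _]]; [lia|]. subst q.
  replace (2 * (r + k2) - 2 * k2)%nat with (2 * r)%nat by lia.
  replace (2 * r + 2)%nat with (2 * S r)%nat by lia.
  replace (2 * S r / 2)%nat with (S r) by (rewrite Nat.mul_comm, Nat.div_mul; lia).
  rewrite Jv_even. unfold coef, C2, E, cR.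
  replace (2 * k2 + hm d)%nat with n by reflexivity.
  rewrite !binom_le by (unfold n in *; lia).
  rewrite !ffR_fact by lia.
  replace (2 * (r + k2) - 2 * k2)%nat with (2 * r)%nat by lia.
  replace (2 * (r + k2) - (2 * k2 - 1))%nat with (S (2 * r)) by lia.
  rewrite fact_simpl.
  rewrite !plus_INR, !mult_INR, !S_INR. simpl (INR 2). simpl (INR 1). rewrite ?INR_0.
  assert (0 <= INR r) by apply pos_INR.
  assert (INR (fact (2 * (r + k2))) <> 0) by apply INR_fact_neq_0.
  assert (INR (fact (2 * r)) <> 0) by apply INR_fact_neq_0.
  assert (2 ^ (2 * S r) <> 0) by (apply pow_nonzero; lra).
  rewrite ?mult_INR. simpl (INR 2). set (sg := (-1) ^ (r + k2)). set (tw := 2 ^ (2 * S r)). field. repeat split; try lra; auto.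
Qed.

Lemma case_odd d k : (2 <= d)%nat -> Nat.Even d -> (3 <= k)%nat -> Nat.Odd k -> ck_is d k (ck_odd_formula d k).
Proof.
  intros Hd He Hk [k2 Hk2]. subst k.
  eapply ck_is_eq; [apply (ck_val d (2 * k2 + 1) _ Hd He (theta_Gk (2 * k2 + 1 + hm d) (2 * k2 + 1)))|].
  unfold ck_odd_formula. rewrite sumR_LS.
  replace ((2 * k2 + 1 + 1) / 2)%nat with (S k2) by (apply (Nat.div_unique _ _ _ 0); lia).
  set (n := (2 * k2 + 1 + hm d)%nat).
  rewrite (LS_split_low _ (S k2)).
  2: lia.
  2:{ intros q Hq. unfold coef. rewrite ffR_zero by lia. ring. }
  set (P := fun q => ffR (INR (2 * q)) (2 * k2 - 1) * (2 * INR q + (1 - INR (2 * k2 + 1)))).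
  set (E := fun q => (-1) ^ q * binom n q * P q).
  assert (HE : LS (seq (S k2) (S n - S k2)) E = 0).
  { rewrite <- LS_split_low.
    - unfold E. rewrite <- alt_LS. apply (alt_vanish n (S (2 * k2 - 1))); [apply poly_le_mul_lin, ffR_poly|]. unfold n; lia.
    - lia.
    - intros q Hq. unfold E, P. destruct (Nat.eq_dec q k2) as [->|Hne].
      + rewrite plus_INR, mult_INR. simpl (INR 2). simpl (INR 1). ring.
      + rewrite ffR_zero by lia. ring. }
  rewrite (LS_ext _ (fun q => coef n (2 * k2 + 1) q * Jv (2 * q - (2 * k2 + 1)))
     (fun q => / 2 * (C2 q d (2 * k2 + 1) * (/ (2 * INR (2 * q - (2 * k2 + 1) + 1)) *
        (1 - / 2 ^ (2 * q - (2 * k2 + 1) + 1) * binom (2 * q - (2 * k2 + 1) + 1) ((2 * q - (2 * k2 + 1) + 1) / 2)))) + / 4 * E q)).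
  { rewrite LS_plus, !LS_scal, HE. ring. }
  intros q Hq. apply in_seq in Hq.
  destruct (Nat.le_exists_sub (S k2) q) as [r [Hr _]]; [lia|]. subst q.
  replace (2 * (r + S k2) - (2 * k2 + 1))%nat with (2 * r + 1)%nat by lia.
  replace (2 * r + 1 + 1)%nat with (2 * S r)%nat by lia.
  replace (2 * S r / 2)%nat with (S r) by (rewrite Nat.mul_comm, Nat.div_mul; lia).
  rewrite Jv_odd. unfold coef, C2, E, P, cR.
  replace (2 * k2 + 1 + hm d)%nat with n by reflexivity.
  rewrite !binom_le by (unfold n in *; lia).
  rewrite !ffR_fact by lia.
  replace (2 * (r + S k2) - (2 * k2 + 1))%nat with (2 * r + 1)%nat by lia.
  replace (2 * (r + S k2) - (2 * k2 - 1))%nat with (S (S (2 * r + 1))) by lia.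
  rewrite !fact_simpl.
  rewrite !plus_INR, !mult_INR, !S_INR, ?plus_INR, ?mult_INR. simpl (INR 2). simpl (INR 1). rewrite ?INR_0.
  assert (0 <= INR r) by apply pos_INR.
  assert (0 <= INR k2) by apply pos_INR.
  assert (INR (fact (2 * (r + S k2))) <> 0) by apply INR_fact_neq_0.
  assert (INR (fact (2 * r + 1)) <> 0) by apply INR_fact_neq_0.
  set (sg := (-1) ^ (r + S k2)). set (tw := 2 ^ (2 * S r)).
  assert (tw <> 0) by (apply pow_nonzero; lra).
  field. repeat split; try lra; auto.
Qed.

Lemma C_odd_mid h : Binomial.C (2 * h + 1) (S h) = Binomial.C (2 * h) h * (2 * INR h + 1) / (INR h + 1).
Proof.
  unfold Binomial.C. replace (2 * h + 1 - S h)%nat with h by lia. replace (2 * h - h)%nat with h by lia.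
  replace (2 * h + 1)%nat with (S (2 * h)) by lia. rewrite !fact_simpl, !mult_INR, !S_INR, mult_INR.
  simpl (INR 2).
  assert (INR (fact h) <> 0) by apply INR_fact_neq_0.
  assert (0 <= INR h) by apply pos_INR.
  field. repeat split; lra.
Qed.

Lemma int_cos_even_sin q : is_RInt (fun t => cos t ^ (2 * q) * sin t) 0 PI (2 / (2 * INR q + 1)).
Proof.
  assert (Hq : 2 * INR q + 1 <> 0) by (generalize (pos_INR q); lra).
  apply (is_RInt_val _ _ _ ((fun t => - / (2 * INR q + 1) * cos t ^ (S (2 * q))) PI - (fun t => - / (2 * INR q + 1) * cos t ^ (S (2 * q))) 0)).
  - apply (FTC (fun t => - / (2 * INR q + 1) * cos t ^ (S (2 * q)))); intros x.
    + auto_derive; auto. fix_match. replace (q + (q + 0))%nat with (2 * q)%nat by lia. rewrite S_INR, mult_INR. simpl (INR 2). field. auto.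
    + cont_tac.
  - cbv beta. rewrite cos_PI, cos_0, pow1. rewrite <- tech_pow_Rmult, pow_mult.
    replace ((-1) ^ 2) with 1 by ring. rewrite pow1. field. auto.
Qed.

Lemma Ssum h : sumR 0 h (fun q => (-1) ^ q * binom h q * / INR (2 * q + 1)) = V (2 * h + 1) / 2.
Proof.
  assert (H1 : is_RInt (fun t => Gk h 0 (cos t) * sin t) 0 PI
      (LS (seq 0 (S h)) (fun q => (-1) ^ q * Binomial.C h q * (2 / (2 * INR q + 1))))).
  { eapply is_RInt_ext_all; [|apply (is_RInt_LS _ (fun q t => (-1) ^ q * Binomial.C h q * (cos t ^ (2 * q) * sin t)))].
    - intros x. cbv beta. unfold Gk. rewrite (Rmult_comm _ (sin x)), <- LS_scal. apply LS_ext. intros q _.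
      rewrite Nat.sub_0_r. change (ffR (INR (2 * q)) 0) with 1. ring.
    - intros q _. apply is_RInt_scal'. apply int_cos_even_sin. }
  assert (H2 : is_RInt (fun t => Gk h 0 (cos t) * sin t) 0 PI (V (2 * h + 1))).
  { eapply is_RInt_ext_all; [|apply V_is]. intros x. rewrite <- Gk0. cbv beta.
    replace (1 - cos x ^ 2) with (sin x ^ 2) by (generalize (sc x); intros; ring_simplify; lra).
    rewrite <- pow_mult, pow_add. ring. }
  rewrite (is_RInt_eq _ _ _ _ _ H2 H1).
  rewrite sumR_LS, Nat.sub_0_r. unfold Rdiv. rewrite Rmult_comm, <- LS_scal. apply LS_ext.
  intros q Hq. apply in_seq in Hq. rewrite binom_le by lia. rewrite plus_INR, mult_INR. simpl (INR 2). simpl (INR 1).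
  assert (0 <= INR q) by apply pos_INR. field. lra.
Qed.

Lemma case_k0 d : (2 <= d)%nat -> Nat.Even d -> ck_is d 0 (c0_formula d).
Proof.
  intros Hd He. destruct (half_even d He Hd) as [h [Hd1 [Hd2 Hd3]]].
  assert (Hv : is_RInt (fun t => / (4 * PI) * (cos t + 1) * (PI - t) * Gk (0 + hm d) 0 (cos t) * sin t) 0 PI
     (/ (4 * PI) * (PI / 2 * V (2 * h + 1) + V (S (2 * h + 1)) / (INR (2 * h + 1) + 1)))).
  { eapply is_RInt_ext_all; [|apply is_RInt_scal'; eapply is_RInt_val; [apply (is_RInt_lin _ _ _ _ _ _ 1 1 (Ipi_sin (2 * h + 1)) (Ipi_cos_sin (2 * h + 1)))|ring]].
    intros x. cbv beta. rewrite Hd3. simpl (0 + h)%nat. rewrite <- Gk0.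
    replace (1 - cos x ^ 2) with (sin x ^ 2) by (generalize (sc x); intros; ring_simplify; lra).
    rewrite <- pow_mult, pow_add. ring. }
  eapply ck_is_eq; [apply (ck_val d 0 _ Hd He Hv)|].
  unfold c0_formula. rewrite Hd2, Hd3, Ssum. subst d.
  replace (S (2 * h + 1)) with (2 * S h)%nat by lia.
  rewrite V_odd, V_even.
  rewrite !binom_le by lia.
  replace (2 * S h - 1)%nat with (2 * h + 1)%nat by lia.
  rewrite C_odd_mid.
  replace (Binomial.C (2 * S h) (S h)) with (cR (S h) * 2 ^ (2 * S h))
    by (unfold cR; field; apply pow_nonzero; lra).
  rewrite cR_S.
  replace (2 ^ (2 * S h + 1)) with (8 * 2 ^ (2 * h)) by (replace (2 * S h + 1)%nat with (3 + 2 * h)%nat by lia; rewrite pow_add; simpl; ring).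
  replace (2 ^ (2 * h + 1)) with (2 * 2 ^ (2 * h)) by (rewrite pow_add; simpl; ring).
  replace (2 ^ (2 * S h)) with (4 * 2 ^ (2 * h)) by (replace (2 * S h)%nat with (2 + 2 * h)%nat by lia; rewrite pow_add; simpl; ring).
  assert (Hc : 0 < cR h) by apply cR_pos.
  unfold cR in *. set (tw := 2 ^ (2 * h)) in *. set (X := Binomial.C (2 * h) h) in *.
  assert (Htw : 0 < tw) by (apply pow_lt; lra).
  assert (HX : 0 < X) by (apply (Rmult_lt_reg_r (/ tw)); [apply Rinv_0_lt_compat; auto|]; rewrite Rmult_0_l; exact Hc).
  rewrite !plus_INR, !mult_INR, !S_INR. simpl (INR 2). simpl (INR 1). rewrite ?INR_0.
  assert (0 <= INR h) by apply pos_INR. assert (PI > 0) by apply PI_RGT_0.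
  field. repeat split; try lra; auto.
Qed.

Theorem mainTheorem7 (d : nat) (hd : (2 <= d)%nat) (hev : Nat.Even d) :
  ck_is d 0 (c0_formula d) /\
  ck_is d 1 (c1_formula d) /\
  (forall k : nat, (2 <= k)%nat -> Nat.Even k -> ck_is d k (ck_even_formula d k)) /\
  (forall k : nat, (3 <= k)%nat -> Nat.Odd k -> ck_is d k (ck_odd_formula d k)).
Proof.
  split; [apply case_k0; auto|].
  split; [apply case_k1; auto|].
  split; intros k Hk Hp; [apply case_even|apply case_odd]; auto.
Qed.
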